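(* Let $(X,d,\mu)$ be a doubling metric measure space such that $(X,d)$ is connected and $L$-annularly connected for some $L\ge1$. Then $(X,d)$ satisfies a chain condition.
   Context: $\mu$ is doubling if every ball has positive finite measure and $\mu(B(x,2r))\le C_\mu\mu(B(x,r))$ for all $x\in X$, $r>0$. For $0<r<R$, $A(x,r,R)=\overline{B}(x,R)\setminus B(x,r)$. $X$ is $L$-annularly connected if whenever $y,z\in A(x,r,2r)$ for some $x\in X$, $r>0$, there is a curve joining $y$ and $z$ in $A(x,r/L,2rL)$. Chain condition: for every $\lambda\ge1$ there are constants $M\ge1$, $0<m\le1$ such that for each $x\in X$ and all $0<r<\operatorname{diam}(X)/8$ there is a sequence of balls $B_0,B_1,\dots$ with (1) $B_0\subset X\setminus B(x,r)$; (2) $M^{-1}\operatorname{diam}(B_i)\le\operatorname{dist}(x,B_i)\le M\operatorname{diam}(B_i)$; (3) $\operatorname{dist}(x,B_i)\le Mr2^{-mi}$; (4) there is a ball $D_i\subset B_i\cap B_{i+1}$ with $B_i\cup B_{i+1}\subset MD_i$, for all $i\ge0$; (5) no point of $X$ belongs to more than $M$ of the balls $\lambda B_i$ (where $\lambda B(y,s)=B(y,\lambda s)$). *)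

(* Defs.v *)
(* A metric space is given concretely as a carrier
   type T with a distance d : T -> T -> R (R : realType) satisfying the
   metric axioms; the measure lives on a measurableType structure on T whose
   sigma-algebra is the Borel sigma-algebra of the metric topology. *)
From HB Require Import structures.
From mathcomp Require Import all_boot all_order all_algebra.
From mathcomp Require Import all_classical all_reals all_analysis.
Set Implicit Arguments. Unset Strict Implicit. Unset Printing Implicit Defensive.
Import Order.TTheory GRing.Theory Num.Theory.
Local Open Scope classical_set_scope.
Local Open Scope ring_scope.

Section MetricDefs.
Context {R : realType} {T : Type} (d : T -> T -> R).

Definition is_metric : Prop :=
  (forall x y, 0 <= d x y) /\
  (forall x y, d x y = 0 <-> x = y) /\
  (forall x y, d x y = d y x) /\
  (forall x y z, d x z <= d x y + d y z).

Definition oball (x : T) (r : R) : set T := [set y | d x y < r].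
Definition cball (x : T) (r : R) : set T := [set y | d x y <= r].

Definition annulus (x : T) (r R' : R) : set T := cball x R' `\` oball x r.

Definition d_open (U : set T) : Prop :=
  forall x, U x -> exists2 r : R, 0 < r & oball x r `<=` U.

Definition d_connected : Prop :=
  ~ exists U V : set T, [/\ d_open U /\ d_open V, U !=set0, V !=set0,
      U `&` V = set0 & U `|` V = setT].

(* a curve joining y and z inside a set A: a continuous map gamma : [0,1] -> X
   (given as a function on R, only its values on [0,1] matter) *)
Definition curve_in (A : set T) (y z : T) : Prop :=
  exists gamma : R -> T,
    [/\ (forall t, 0 <= t <= 1 -> forall e, 0 < e ->
           exists2 del : R, 0 < del & forall s, 0 <= s <= 1 ->
             `|s - t| < del -> d (gamma s) (gamma t) < e),
        gamma 0 = y, gamma 1 = z &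
        forall t, 0 <= t <= 1 -> A (gamma t)].

Definition annularly_connected (L : R) : Prop :=
  forall (x : T) (r : R), 0 < r -> forall y z,
    annulus x r (2 * r) y -> annulus x r (2 * r) z ->
    curve_in (annulus x (r / L) (2 * r * L)) y z.

(* diameter of a set (in the extended reals; diam set0 = -oo) *)
Definition diam (A : set T) : \bar R :=
  ereal_sup [set (d y z)%:E | y in A & z in A].

Definition dist (x : T) (A : set T) : \bar R :=
  ereal_inf [set (d x y)%:E | y in A].

(* the chain condition; a ball is a pair (center, radius) with radius > 0,
   and lambda B(y,s) = B(y, lambda s) *)
Definition chain_condition : Prop :=
  forall lam : R, 1 <= lam ->
  exists M : R, exists m : R, [/\ 1 <= M, 0 < m, m <= 1 &
  forall (x : T) (r : R), 0 < r -> ((8 * r)%:E < diam setT)%E ->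
  exists (c : nat -> T) (s : nat -> R),
    (forall i, 0 < s i) /\
    [/\
        oball (c 0%N) (s 0%N) `<=` ~` oball x r,
        (forall i, ((M^-1)%:E * diam (oball (c i) (s i))
                      <= dist x (oball (c i) (s i)))%E /\
                   (dist x (oball (c i) (s i))
                      <= M%:E * diam (oball (c i) (s i)))%E),
        (forall i, (dist x (oball (c i) (s i))
                      <= (M * r * powR 2 (- (m * i%:R)))%:E)%E),
        (forall i, exists (c' : T) (s' : R), [/\ 0 < s',
            oball c' s' `<=` oball (c i) (s i) `&` oball (c i.+1) (s i.+1) &
            oball (c i) (s i) `|` oball (c i.+1) (s i.+1) `<=` oball c' (M * s')])
      &
        (forall y (S : seq nat), uniq S ->
            (forall i, i \in S -> oball (c i) (lam * s i) y) ->
            (size S)%:R <= M)]].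

End MetricDefs.

Section MeasureDefs.
Context {R : realType} {dsp : measure_display} {T : measurableType dsp}.
Variable (d : T -> T -> R) (mu : {measure set T -> \bar R}).

Definition borel_for_metric : Prop :=
  @measurable dsp T = <<s d_open d >>.

Definition doubling : Prop :=
  (forall x r, 0 < r -> (0 < mu (oball d x r))%E /\ (mu (oball d x r) < +oo)%E) /\
  exists C : R, forall x r, 0 < r ->
    (mu (oball d x (2 * r)) <= C%:E * mu (oball d x r))%E.

End MeasureDefs.

(* Main.v *)
Require Import Defs.
From HB Require Import structures.
From mathcomp Require Import all_boot all_order all_algebra.
From mathcomp Require Import all_classical all_reals all_analysis.
From mathcomp Require Import lra ring zify.
Import Order.TTheory GRing.Theory Num.Theory.
Local Open Scope classical_set_scope.
Local Open Scope ring_scope.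
Lemma m_ge0 {R : realType} {T : Type} {d : T -> T -> R} : is_metric d -> forall x y, 0 <= d x y.
Proof. by case. Qed.
Lemma m_xx {R : realType} {T : Type} {d : T -> T -> R} : is_metric d -> forall x, d x x = 0.
Proof. by case=> _ [h _] x; apply/h. Qed.
Lemma m_sym {R : realType} {T : Type} {d : T -> T -> R} : is_metric d -> forall x y, d x y = d y x.
Proof. by case=> _ [_ []]. Qed.
Lemma m_tri {R : realType} {T : Type} {d : T -> T -> R} : is_metric d -> forall x y z, d x z <= d x y + d y z.
Proof. by case=> _ [_ []]. Qed.

Lemma oball_open {R : realType} {T : Type} {d : T -> T -> R} : is_metric d ->
  forall x r, d_open d (oball d x r).
Proof.
move=> hd x r y; rewrite /oball /= => hy; exists (r - d x y); first by rewrite subr_gt0.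
move=> z; rewrite /oball /= => hz; have := m_tri hd x y z; lra.
Qed.

Lemma ivt_dist {R : realType} {T : Type} {d : T -> T -> R} : is_metric d -> d_connected d ->
  forall c w t, 0 < t -> t <= d c w -> exists q, d c q = t.
Proof.
move=> hd hc c w t t0 tw; apply: contrapT => hno.
have hne : forall q, d c q != t by move=> q; apply/eqP => h; apply: hno; exists q.
apply: hc; exists (fun q => d c q < t), (fun q => t < d c q); split.
- split.
  + move=> y /= hy; exists (t - d c y); first by rewrite subr_gt0.
    move=> z hz; move: hz; rewrite /oball /= => hz; have := m_tri hd c y z; lra.
  + move=> y /= hy; exists (d c y - t); first by rewrite subr_gt0.
    move=> z hz; move: hz; rewrite /oball /= => hz; have := m_tri hd c z y; rewrite (m_sym hd z y); lra.
- by exists c; rewrite /= m_xx.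
- exists w => /=; rewrite lt_neqAle tw andbT eq_sym; exact: hne.
- by apply/seteqP; split => y //= [] /= h1 h2; lra.
- apply/seteqP; split => y //= _; have := hne y; rewrite neq_lt; case/orP=> h; [left|right] => //.
Qed.

Lemma diam_ball_le {R : realType} {T : Type} {d : T -> T -> R} : is_metric d ->
  forall c s, (diam d (oball d c s) <= (2 * s)%:E)%E.
Proof.
move=> hd c s; apply: ge_ereal_sup => _ [y hy] [z hz] <-; rewrite lee_fin.
move: hy hz; rewrite /oball /= => hy hz.
have := m_tri hd y c z; rewrite (m_sym hd y c); lra.
Qed.

Lemma diam_ball_ge {R : realType} {T : Type} {d : T -> T -> R} : is_metric d ->
  forall c s q, 0 < s -> d c q < s -> ((d c q)%:E <= diam d (oball d c s))%E.
Proof.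
move=> hd c s q s0 hq; apply: ereal_sup_ubound; exists c; first by rewrite /oball /= m_xx.
by exists q.
Qed.

Lemma dist_ball_le {R : realType} {T : Type} {d : T -> T -> R} : is_metric d ->
  forall x c s, 0 < s -> (dist d x (oball d c s) <= (d x c)%:E)%E.
Proof.
move=> hd x c s s0; apply: ereal_inf_lbound; exists c => //; by rewrite /oball /= m_xx.
Qed.

Lemma dist_ball_ge {R : realType} {T : Type} {d : T -> T -> R} : is_metric d ->
  forall x c s, ((d x c - s)%:E <= dist d x (oball d c s))%E.
Proof.
move=> hd x c s; apply: le_ereal_inf_tmp => _ [y hy] <-; rewrite lee_fin.
move: hy; rewrite /oball /= => hy.
have := m_tri hd x y c; rewrite (m_sym hd y c); lra.
Qed.

Lemma far_point {R : realType} {T : Type} {d : T -> T -> R} : is_metric d ->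
  forall x (a : R), ((2 * a)%:E < diam d setT)%E -> exists w, a < d x w.
Proof.
move=> hd x a ha; apply: contrapT => hno; move: ha; apply/negP; rewrite -leNgt.
apply: ge_ereal_sup => _ [y _] [z _] <-; rewrite lee_fin.
have h1 : d x y <= a by rewrite leNgt; apply/negP => h; apply: hno; exists y.
have h2 : d x z <= a by rewrite leNgt; apply/negP => h; apply: hno; exists z.
have := m_tri hd y x z; rewrite (m_sym hd y x); lra.
Qed.
Definition dchain {R : realType} {T : Type} (d : T -> T -> R) (A : set T) (eps : R) (y z : T)
  (n : nat) (p : nat -> T) : Prop :=
  [/\ p 0%N = y, p n = z, (forall j, (j < n)%N -> d (p j) (p j.+1) < eps) &
      (forall j, (j <= n)%N -> A (p j))].

Lemma short_chain {R : realType} {T : Type} {d : T -> T -> R} A eps y z :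
  (exists n p, dchain d A eps y z n p) ->
  exists n p, dchain d A eps y z n p /\
    (forall a b, (a.+2 <= b)%N -> (b <= n)%N -> eps <= d (p a) (p b)).
Proof.
case=> n; elim/ltn_ind: n => n IH [p hp].
have [hsep|hns] := pselect (forall a b, (a.+2 <= b)%N -> (b <= n)%N -> eps <= d (p a) (p b)).
  by exists n, p.
have [a [b [ab bn hab]]] : exists a b, [/\ (a.+2 <= b)%N, (b <= n)%N & d (p a) (p b) < eps].
  apply: contrapT => hno; apply: hns => a b ab bn; rewrite leNgt; apply/negP => h.
  by apply: hno; exists a, b.
pose k := (b - a - 1)%N.
pose q j := if (j <= a)%N then p j else p (j + k)%N.
case: hp => p0 pn ps pA.
apply: (IH (n - k)%N); first by rewrite /k; lia.
exists q; split.
- by rewrite /q leq0n.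
- rewrite /q ifF; last by apply/negbTE; rewrite /k; lia.
  by have -> : (n - k + k = n)%N by rewrite /k; lia.
- move=> j jn; rewrite /q.
  have [ja|ja] := ltnP j a.
    have -> : (j <= a)%N = true by lia.
    apply: ps; lia.
  have [jea|jea] := eqVneq j a.
    subst j; have -> : (a <= a)%N = true by lia.
    by have -> : (a.+1 + k = b)%N by rewrite /k; lia.
  have -> : (j <= a)%N = false by lia.
  have -> : (j.+1 + k = (j + k).+1)%N by lia.
  apply: ps; rewrite /k; lia.
- move=> j jn; rewrite /q; case: ifP => h; apply: pA; rewrite /k; lia.
Qed.
Lemma dchain_ext {R : realType} {T : Type} {d : T -> T -> R} A eps y a b n p :
  dchain d A eps y a n p -> A b -> d a b < eps ->
  dchain d A eps y b n.+1 (fun j => if (j <= n)%N then p j else b).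
Proof.
case=> p0 pn ps pA Ab ab; split => //=.
- by rewrite ltnn.
- move=> j jn; rewrite ltnS in jn; rewrite jn.
  have [h|h] := ltnP j n; first by apply: ps.
  have e : j = n by apply/eqP; rewrite eqn_leq jn h.
  by rewrite e pn.
- by move=> j jn; case: ifP => h; [apply: pA|].
Qed.

Lemma curve_chain {R : realType} {T : Type} {d : T -> T -> R} : is_metric d ->
  forall A y z eps, curve_in d A y z -> 0 < eps -> exists n p, dchain d A eps y z n p.
Proof.
move=> hd A y z eps [g [gc g0 g1 gA]] e0.
pose S := [set t : R | (0 <= t <= 1) /\ exists n p, dchain d A eps y (g t) n p].
have S0 : S 0.
  split; first by rewrite lexx ler01.
  exists 0%N, (fun=> y); split => //.
  by move=> j _; rewrite -g0; apply: gA; rewrite lexx ler01.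
have hs : has_sup S by split; [exists 0 | exists 1 => t [] /andP[]].
set ts := sup S.
have ts0 : 0 <= ts by apply: sup_upper_bound.
have ts1 : ts <= 1 by apply: ge_sup; [exists 0 | move=> t [] /andP[]].
have ts01 : 0 <= ts <= 1 by rewrite ts0 ts1.
have [del del0 hdel] := gc ts ts01 eps e0.
have [t St tlt] := sup_adherent del0 hs.
rewrite -/ts in tlt.
have tsle : t <= ts by apply: sup_upper_bound.
have reachts : exists n p, dchain d A eps y (g ts) n p.
  case: St => t01 [n [p hp]]; exists n.+1; eexists; apply: dchain_ext; first exact: hp.
    exact: gA.
  apply: hdel => //; rewrite ler0_norm ?subr_le0 //; lra.
have : ts = 1.
  apply: contrapT => hne.
  have tsl1 : ts < 1 by rewrite lt_neqAle ts1 andbT; apply/eqP.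
  pose s := Num.min 1 (ts + del / 2).
  have s1 : s <= 1 by rewrite /s ge_min lexx.
  have sgt : ts < s by rewrite /s lt_min tsl1 /=; lra.
  have s01 : 0 <= s <= 1 by rewrite s1 andbT; lra.
  have sle : s <= ts + del / 2 by rewrite /s ge_min lexx orbT.
  have Ss : S s.
    split => //; case: reachts => n [p hp]; exists n.+1; eexists; apply: dchain_ext; first exact: hp.
      exact: gA.
    rewrite (m_sym hd); apply: hdel => //; rewrite gtr0_norm ?subr_gt0 //; lra.
  have := sup_upper_bound hs Ss; rewrite -/ts; lra.
by move=> h; rewrite h g1 in reachts.
Qed.
Lemma open_meas {R : realType} {dsp : measure_display} {T : measurableType dsp}
  {d : T -> T -> R} : borel_for_metric d -> forall U, d_open d U -> measurable U.
Proof. by move=> hb U hU; rewrite hb; apply: sub_sigma_algebra. Qed.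

Lemma doubling_iter {R : realType} {dsp : measure_display} {T : measurableType dsp}
  (d : T -> T -> R) (mu : {measure set T -> \bar R}) C :
  0 <= C ->
  (forall x r, 0 < r -> (mu (oball d x (2 * r)) <= C%:E * mu (oball d x r))%E) ->
  forall j x s, 0 < s -> (mu (oball d x (2 ^+ j * s)) <= (C ^+ j)%:E * mu (oball d x s))%E.
Proof.
move=> C0 hC; elim=> [|j IH] x s s0; first by rewrite expr0 !mul1r mul1e.
rewrite exprS -mulrA (le_trans (hC _ _ _)) ?mulr_gt0 ?exprn_gt0 //.
rewrite exprS EFinM -muleA; apply: lee_wpmul2l; first by rewrite lee_fin.
exact: IH.
Qed.
Lemma packing {R : realType} {dsp : measure_display} {T : measurableType dsp}
  (d : T -> T -> R) (mu : {measure set T -> \bar R}) C :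
  is_metric d -> borel_for_metric d ->
  (forall x r, 0 < r -> (0 < mu (oball d x r))%E /\ (mu (oball d x r) < +oo)%E) ->
  (forall x r, 0 < r -> (mu (oball d x (2 * r)) <= C%:E * mu (oball d x r))%E) ->
  0 <= C ->
  forall (k : nat) x R0 t (q : nat -> T) (m : nat), 0 < t -> t <= R0 ->
  2 * R0 <= 2 ^+ k * t ->
  (forall a, (a < m)%N -> d x (q a) <= R0) ->
  (forall a b, (a < b)%N -> (b < m)%N -> 2 * t <= d (q a) (q b)) ->
  m%:R <= C ^+ k.+1.
Proof.
move=> hd hb hpos hC C0 k x R0 t q m t0 tR hk hin hsep.
have R00 : 0 < R0 by lra.
have [V0 Vfin] := hpos x R0 R00.
set V := mu (oball d x R0) in V0 Vfin.
have Vf : V \is a fin_num by rewrite ge0_fin_numE // ltW.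
set v := fine V.
have vE : V = v%:E by rewrite fineK.
have v0 : 0 < v by rewrite -lte_fin -vE.
have Ck0 : 0 <= C ^+ k by rewrite exprn_ge0.
have mB : forall c r, measurable (oball d c r) by move=> c r; exact: (open_meas hb _ (oball_open hd _ _)).
have low : forall a, (a < m)%N -> (v%:E <= (C ^+ k)%:E * mu (oball d (q a) t))%E.
  move=> a am; rewrite -vE.
  apply: (le_trans _ (doubling_iter d mu C C0 hC k (q a) t t0)).
  apply: le_measure; [by rewrite inE; exact: mB|by rewrite inE; exact: mB|].
  move=> y; rewrite /oball /= => hy.
  have := m_tri hd (q a) x y; rewrite (m_sym hd (q a) x); have := hin a am; lra.
pose U j := [set y | exists2 a, (a < j)%N & d (q a) y < t].
have Uo j : d_open d (U j).
  move=> y [a aj hy]; exists (t - d (q a) y); first by rewrite subr_gt0.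
  move=> z; rewrite /oball /= => hz; exists a => //; have := m_tri hd (q a) y z; lra.
have claim : forall j, (j <= m)%N -> ((j%:R * v)%:E <= (C ^+ k)%:E * mu (U j))%E.
  elim=> [|j IH] jm; first by rewrite mul0r; apply: mule_ge0; rewrite ?lee_fin.
  have eU : U j.+1 = U j `|` oball d (q j) t.
    apply/seteqP; split => y.
      case=> a; rewrite ltnS leq_eqVlt => /orP[/eqP -> hy|aj hy]; [by right|by left; exists a].
    case=> [[a aj hy]|hy]; [exists a => //; exact: ltnW| by exists j].
  have disj : U j `&` oball d (q j) t = set0.
    apply/seteqP; split => y //= [[a aj hy] hy2]; move: hy2; rewrite /oball /= => hy2.
    have := hsep a j aj jm; have := m_tri hd (q a) y (q j); rewrite (m_sym hd y (q j)); lra.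
  rewrite eU measureU //; last exact: (open_meas hb _ (Uo j)).
  all: try exact: mB.
  rewrite ge0_muleDr //.
  rewrite -natr1 mulrDl mul1r EFinD; apply: leeD; last exact: low.
  by apply: IH; exact: ltnW.
have Usub : (mu (U m) <= (C * v)%:E)%E.
  have h1 : (mu (U m) <= mu (oball d x (2 * R0)))%E.
    apply: le_measure; [by rewrite inE; exact: (open_meas hb _ (Uo m))|by rewrite inE; exact: mB|].
    move=> y [a am hy]; rewrite /oball /=.
    have := m_tri hd x (q a) y; have := hin a am; lra.
  apply: (le_trans h1); by rewrite EFinM -vE; apply: hC.
have Ck0' : (0 <= (C ^+ k)%:E)%E by rewrite lee_fin.
have := le_trans (claim m (leqnn m)) (lee_wpmul2l Ck0' Usub).
rewrite -EFinM lee_fin => h.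
have h2 : m%:R * v <= C ^+ k.+1 * v.
  by move: h; rewrite exprS mulrA [C ^+ k * C]mulrC.
by rewrite -(ler_pM2r v0).
Qed.
Lemma annulusP {R : realType} {T : Type} (d : T -> T -> R) x a b y :
  annulus d x a b y <-> a <= d x y <= b.
Proof.
rewrite /annulus /cball /oball /=; split.
  by case=> h1 /negP; rewrite -leNgt => h2; rewrite h1 h2.
by case/andP=> h1 h2; split => //; apply/negP; rewrite -leNgt.
Qed.

Lemma scale_chain {R : realType} {dsp : measure_display} {T : measurableType dsp}
  (d : T -> T -> R) (mu : {measure set T -> \bar R}) C L lam (k0 N : nat) :
  is_metric d -> borel_for_metric d -> annularly_connected d L -> 1 <= L -> 1 <= lam ->
  (forall x r, 0 < r -> (0 < mu (oball d x r))%E /\ (mu (oball d x r) < +oo)%E) ->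
  (forall x r, 0 < r -> (mu (oball d x (2 * r)) <= C%:E * mu (oball d x r))%E) ->
  0 <= C ->
  256 * lam * L ^+ 2 <= 2 ^+ k0 -> 2 * C ^+ k0.+1 < N%:R ->
  forall x rho y z, 0 < rho -> annulus d x rho (2 * rho) y -> annulus d x rho (2 * rho) z ->
  exists p : nat -> T, [/\ p 0%N = y, (forall j, (N.-1 <= j)%N -> p j = z),
    (forall j, d (p j) (p j.+1) < rho / (32 * lam * L)) &
    (forall j, rho / L <= d x (p j) <= 2 * rho * L)].
Proof.
move=> hd hb hac L1 lam1 hpos hC C0 hk0 hN x rho y z rho0 hy hz.
set eps := rho / (32 * lam * L).
have eps0 : 0 < eps by rewrite /eps divr_gt0 // !mulr_gt0 //; lra.
have hcur := hac x rho rho0 y z hy hz.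
have [n [p [[p0 pn ps pA] hsep]]] := short_chain _ _ _ _ (curve_chain hd _ _ _ _ hcur eps0).
have pA' : forall j, (j <= n)%N -> rho / L <= d x (p j) <= 2 * rho * L.
  by move=> j jn; apply/annulusP; apply: pA.
have hm : ((n %/ 2).+1)%:R <= C ^+ k0.+1.
  apply: (packing d mu C hd hb hpos hC C0 k0 x (2 * rho * L) (eps / 2)
     (fun a => p (2 * a)%N) ((n %/ 2).+1)).
  - by rewrite divr_gt0.
  - have : eps <= rho by rewrite /eps ler_pdivrMr ?ler_peMr ?ltW //; [nra| rewrite !mulr_gt0 //; lra].
    nra.
  - rewrite /eps.
    have hp : 0 < 64 * lam * L by rewrite !mulr_gt0 //; lra.
    have -> : 2 ^+ k0 * (rho / (32 * lam * L) / 2) = 2 ^+ k0 * rho / (64 * lam * L).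
      by field; apply/andP; split; lra.
    rewrite ler_pdivlMr //.
    have : 0 <= (2 ^+ k0 - 256 * lam * L ^+ 2) * rho by apply: mulr_ge0; lra.
    rewrite expr2 in hk0 *; nra.
  - move=> a am; have h : (2 * a <= n)%N by lia.
    by case/andP: (pA' _ h).
  - move=> a b ab bm; have -> : 2 * (eps / 2) = eps by lra.
    apply: hsep; lia.
have nN : (n <= N.-1)%N.
  have h1 : n%:R < 2 * ((n %/ 2).+1)%:R :> R by rewrite -natrM ltr_nat; lia.
  have h2 : n%:R < N%:R :> R by lra.
  rewrite ltr_nat in h2; lia.
exists (fun j => if (j <= n)%N then p j else z); split.
- by rewrite leq0n.
- move=> j jN; case: ifP => // jn.
  by have -> : j = n by lia.
- move=> j; case: ifP => jn; case: ifP => jn'.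
  + apply: ps; lia.
  + have -> : j = n by lia.
    by rewrite pn (m_xx hd).
  + lia.
  + by rewrite (m_xx hd).
- move=> j; case: ifP => jn; first exact: pA'.
  by apply/annulusP; rewrite -pn; apply: pA.
Qed.
Lemma divmod_succ (N i : nat) : (0 < N)%N ->
  if (i %% N < N.-1)%N then ((i.+1 %/ N = i %/ N)%N /\ (i.+1 %% N = (i %% N).+1)%N)
  else ((i.+1 %/ N = (i %/ N).+1)%N /\ (i.+1 %% N = 0)%N).
Proof.
move=> N0; have ei := divn_eq i N; have lt := ltn_pmod i N0.
case: ifP => h.
  have e : (i.+1 = i %/ N * N + (i %% N).+1)%N by rewrite {1}ei addnS.
  have lt' : ((i %% N).+1 < N)%N by lia.
  by rewrite e divnMDl // modnMDl (divn_small lt') (modn_small lt') addn0.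
have e : (i.+1 = (i %/ N).+1 * N + 0)%N by rewrite {1}ei mulSn; lia.
rewrite e divnMDl // modnMDl div0n mod0n; split; lia.
Qed.

Lemma powR_bound {R : realType} (N i : nat) : (0 < N)%N ->
  (2 ^+ (i %/ N).+1)^-1 <= powR (2 : R) (- (N%:R^-1 * i%:R)).
Proof.
move=> N0.
rewrite -(@powR_mulrn R 2 (i %/ N).+1) //.
rewrite -powRN; apply: ler_powR; first lra.
rewrite lerN2 ler_pdivrMl ?ltr0n //.
rewrite -natrM ler_nat mulnC.
exact: ltnW (ltn_ceil i N0).
Qed.

Lemma ball_step {R : realType} {T : Type} {d : T -> T -> R} : is_metric d ->
  forall c1 c2 s1 s2 (M : R), 3 <= M -> 0 < s1 -> d c1 c2 + s1 / 2 <= s2 -> s2 <= s1 ->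
  exists (c' : T) (s' : R), [/\ 0 < s',
            oball d c' s' `<=` oball d c1 s1 `&` oball d c2 s2 &
            oball d c1 s1 `|` oball d c2 s2 `<=` oball d c' (M * s')].
Proof.
move=> hd c1 c2 s1 s2 M M3 s10 h1 h2; exists c1, (s1 / 2); split.
- by rewrite divr_gt0.
- move=> y; rewrite /oball /= => hy; split; first lra.
  rewrite /=; have := m_tri hd c2 c1 y; rewrite (m_sym hd c2 c1); lra.
- have hM : s1 <= M * (s1 / 2) by nra.
  move=> y [|]; rewrite /oball /= => hy; first lra.
  have := m_tri hd c1 c2 y; have := m_ge0 hd c1 c2; nra.
Qed.
Lemma overlap {R : realType} {T : Type} {d : T -> T -> R} : is_metric d ->
  forall (x y : T) (c : nat -> T) (a s : nat -> R) (lam L A : R) (N J0 : nat),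
  (0 < N)%N -> 1 <= L -> 6 * L ^+ 2 + 1 <= 2 ^+ J0 ->
  (forall i, 0 < a i) -> (forall i, a i <= d x (c i) <= 2 * a i * L ^+ 2) ->
  (forall i, lam * s i = a i / 16) ->
  (forall i, a i * 2 ^+ (i %/ N) = A) ->
  forall S, uniq S -> (forall i, i \in S -> oball d (c i) (lam * s i) y) ->
  (size S <= 2 * J0 * N)%N.
Proof.
move=> hd x y c a s lam L A N J0 N0 L1 hJ0 a0 hD hl hA S uS hS.
have hL2 : 1 <= L ^+ 2 by rewrite exprn_ege1.
have hy : forall i, i \in S -> 15 / 16 * a i <= d x y /\ d x y <= 4 * a i * L ^+ 2.
  move=> i iS; have := hS i iS; rewrite /oball /= hl => hci.
  case/andP: (hD i) => h1 h2.
  have t1 := m_tri hd x y (c i); rewrite (m_sym hd y (c i)) in t1.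
  have t2 := m_tri hd x (c i) y.
  have := a0 i => ai0.
  have : a i <= a i * L ^+ 2 by rewrite ler_peMr // ltW.
  split; nra.
have claim : forall i i', i \in S -> i' \in S -> (i %/ N < i' %/ N + J0)%N.
  move=> i i' iS i'S; rewrite ltnNge; apply/negP => hle.
  case: (hy i iS) => hi1 hi2; case: (hy i' i'S) => hi1' hi2'.
  have e : 2 ^+ (i %/ N) = 2 ^+ (i %/ N - i' %/ N) * 2 ^+ (i' %/ N) :> R.
    by rewrite -exprD subnK //; lia.
  have eJ : 2 ^+ J0 <= 2 ^+ (i %/ N - i' %/ N) :> R.
    rewrite ler_eXn2l; [lia|lra].
  have ea : a i' = a i * 2 ^+ (i %/ N - i' %/ N).
    apply: (mulIf (x := 2 ^+ (i' %/ N))); first by rewrite expf_neq0.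
    by rewrite hA -mulrA -e hA.
  move: ea eJ; generalize (2 ^+ (i %/ N - i' %/ N) : R) => t ea eJ.
  rewrite ea in hi1'.
  have h : a i * (15 / 16 * t) <= a i * (4 * L ^+ 2) by lra.
  rewrite ler_pM2l // in h; lra.
case: S uS hS hy claim => [|i0 S'] uS hS hy claim; first by [].
set S := i0 :: S' in uS hS hy claim *.
have i0S : i0 \in S by rewrite inE eqxx.
set k0 := (i0 %/ N)%N.
have sub : {subset S <= iota ((k0 - J0) * N) (2 * J0 * N)}.
  move=> i iS; rewrite mem_iota.
  have c1 := claim i i0 iS i0S; have c2 := claim i0 i i0S iS.
  rewrite -/k0 in c1 c2.
  apply/andP; split.
    apply: (leq_trans _ (leq_trunc_div i N)); rewrite leq_mul2r; apply/orP; right.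
    by move: c2; rewrite /k0; generalize (i %/ N)%N (i0 %/ N)%N => u v; lia.
  apply: (leq_trans (ltn_ceil i N0)).
  rewrite -mulnDl leq_mul2r; apply/orP; right.
  by move: c1; rewrite /k0; generalize (i %/ N)%N (i0 %/ N)%N => u v; lia.
by have := uniq_leq_size uS sub; rewrite size_iota.
Qed.
Lemma nat_pow_bound {R : realType} (x : R) : 0 <= x -> exists k : nat, x <= 2 ^+ k.
Proof.
move=> x0; exists (Num.bound x); apply: ltW; apply: (lt_le_trans (archi_boundP x0)).
rewrite -natrX ler_nat; apply: ltnW; exact: ltn_expl.
Qed.

Lemma nat_bound {R : realType} (x : R) : 0 <= x -> exists N : nat, x < N%:R.
Proof. by move=> x0; exists (Num.bound x); apply: archi_boundP. Qed.

Lemma arith_s {R : realType} (a s lam L D : R) :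
  0 < a -> 1 <= lam -> 1 <= L -> a = 16 * lam * s -> a <= D -> D <= 2 * a * L ^+ 2 ->
  [/\ 0 < s, 3 * s <= D, s / 2 <= D, D <= 64 * lam * L ^+ 2 * (s / 2) & lam * s = a / 16].
Proof.
move=> a0 lam1 L1 ha h1 h2.
have s0 : 0 < s by nra.
split => //; try nra.
Qed.

Theorem lemma3p3 (R : realType) (dsp : measure_display) (T : measurableType dsp)
  (d : T -> T -> R) (mu : {measure set T -> \bar R}) (L : R) :
  is_metric d -> borel_for_metric d -> doubling d mu ->
  d_connected d -> 1 <= L -> annularly_connected d L ->
  chain_condition d.
Proof.
move=> hd hb [hpos [C0' hC0']] hcon L1 hac.
set C := Num.max C0' 1.
have C0 : 0 <= C by rewrite le_max ler01 orbT.
have hC : forall x r, 0 < r -> (mu (oball d x (2 * r)) <= C%:E * mu (oball d x r))%E.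
  move=> x r r0; apply: (le_trans (hC0' x r r0)); apply: lee_wpmul2r => //.
  by rewrite lee_fin le_max lexx.
move=> lam lam1.
have L0 : 0 < L by lra.
have lam0 : 0 < lam by lra.
have [k0 hk0] := nat_pow_bound (256 * lam * L ^+ 2) (ltac:(rewrite !mulr_ge0 // ?exprn_ge0; lra)).
have [N hN] := nat_bound (2 * C ^+ k0.+1) (ltac:(rewrite mulr_ge0 // exprn_ge0 //)).
have N0 : (0 < N)%N.
  have : 0 < N%:R :> R by apply: le_lt_trans hN; rewrite mulr_ge0 // exprn_ge0.
  by rewrite ltr0n.
have [J0 hJ0] := nat_pow_bound (6 * L ^+ 2 + 1) (ltac:(rewrite addr_ge0 // mulr_ge0 // exprn_ge0; lra)).
pose M := 64 * lam * L ^+ 2 + 8 * L + 3 + ((2 * J0) * N)%:R.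
have Mge : [/\ 64 * lam * L ^+ 2 <= M, 8 * L <= M, 3 <= M & ((2 * J0) * N)%:R <= M].
  have h1 : 0 <= 64 * lam * L ^+ 2 by rewrite !mulr_ge0 // ?exprn_ge0; lra.
  have h2 : 0 <= ((2 * J0) * N)%:R :> R by rewrite ler0n.
  rewrite /M; split; lra.
case: Mge => M1 M2 M3 M4.
have M0 : 0 < M by lra.
exists M, (N%:R^-1); split.
- lra.
- by rewrite invr_gt0 ltr0n.
- by rewrite invf_le1 ?ltr0n // ler1n.
move=> x r r0 hdiam.
have [w hw] : exists w, 4 * r < d x w.
  apply: (far_point hd); have -> : 2 * (4 * r) = 8 * r by lra.
  exact: hdiam.
pose rho (k : nat) := 2 * r / 2 ^+ k.
have rho0 : forall k, 0 < rho k by move=> k; rewrite /rho divr_gt0 ?exprn_gt0 //; lra.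
have rhoS : forall k, rho k.+1 = rho k / 2 by move=> k; rewrite /rho exprS; field; rewrite expf_neq0 //.
have rho_le : forall k, rho k <= 2 * r.
  move=> k; rewrite /rho ler_pdivrMr ?exprn_gt0 //; have : 1 <= (2 : R) ^+ k by apply: exprn_ege1; lra.
  nra.
have zex : forall k, exists z, d x z = 2 * rho k.
  move=> k; apply: (ivt_dist hd hcon x w); first by rewrite mulr_gt0.
  have := rho_le k; lra.
have [zf hzf] := choice zex.
have chex : forall k, exists p : nat -> T, [/\ p 0%N = zf k, (forall j, (N.-1 <= j)%N -> p j = zf k.+1),
    (forall j, d (p j) (p j.+1) < rho k / (32 * lam * L)) &
    (forall j, rho k / L <= d x (p j) <= 2 * rho k * L)].
  move=> k; apply: (scale_chain d mu C L lam k0 N hd hb hac L1 lam1 hpos hC C0 hk0 hN x (rho k)).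
  - exact: rho0.
  - apply/annulusP; rewrite hzf; have := rho0 k; lra.
  - apply/annulusP; rewrite hzf rhoS; have := rho0 k; lra.
have [P hP] := choice chex.
pose c (i : nat) := P (i %/ N)%N (i %% N)%N.
pose a (i : nat) := rho (i %/ N)%N / L.
pose s (i : nat) := a i / (16 * lam).
have a0 : forall i, 0 < a i by move=> i; rewrite /a divr_gt0.
have ha : forall i, a i = 16 * lam * s i by move=> i; rewrite /s; field; lra.
have hD : forall i, a i <= d x (c i) <= 2 * a i * L ^+ 2.
  move=> i; case: (hP (i %/ N)%N) => _ _ _ /(_ (i %% N)%N); rewrite /c /a.
  have -> : 2 * (rho (i %/ N)%N / L) * L ^+ 2 = 2 * rho (i %/ N)%N * L by field; lra.
  done.
have hfacts : forall i, [/\ 0 < s i, 3 * s i <= d x (c i), s i / 2 <= d x (c i),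
    d x (c i) <= 64 * lam * L ^+ 2 * (s i / 2) & lam * s i = a i / 16].
  move=> i; case/andP: (hD i) => h1 h2; exact: arith_s (a0 i) lam1 L1 (ha i) h1 h2.
exists c, s; split; first by move=> i; case: (hfacts i).
split.
-
  move=> y; rewrite /oball /= => hy hxy.
  have e0 : c 0%N = zf 0%N by rewrite /c div0n mod0n; case: (hP 0%N).
  have r0' : rho 0%N = 2 * r by rewrite /rho expr0 divr1.
  have hz0 := hzf 0%N; rewrite r0' in hz0.
  rewrite e0 in hy.
  have hs0 : s 0%N <= 2 * r.
    have e : s 0%N * (16 * lam * L) = 2 * r by rewrite /s /a div0n r0'; field; lra.
    have hX : 1 <= 16 * lam * L by nra.
    case: (hfacts 0%N) => s00 _ _ _ _.
    move: e hX; generalize (16 * lam * L) => X e hX; nra.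
  have := m_tri hd x y (zf 0%N); rewrite (m_sym hd y (zf 0%N)); lra.
-
  move=> i; case: (hfacts i) => si0 h3 h2 h64 _.
  have Mi0 : 0 <= M^-1 by rewrite invr_ge0 ltW.
  have Mi1 : M^-1 <= 1 by rewrite invf_le1 //; lra.
  have hMi : (0 <= (M^-1)%:E)%E by rewrite lee_fin.
  split.
  + apply: (le_trans _ (dist_ball_ge hd x (c i) (s i))).
    apply: (le_trans (lee_wpmul2l hMi (diam_ball_le hd (c i) (s i)))).
    rewrite -EFinM lee_fin; nra.
  + have [q hq] := ivt_dist hd hcon (c i) x (s i / 2) (ltac:(rewrite divr_gt0 //))
      (ltac:(rewrite (m_sym hd); exact: h2)).
    apply: (le_trans (dist_ball_le hd x (c i) (s i) si0)).
    have hh : ((d x (c i))%:E <= (M * (s i / 2))%:E)%E.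
      rewrite lee_fin; apply: (le_trans h64); apply: ler_wpM2r; [rewrite divr_ge0 //; lra | exact: M1].
    apply: (le_trans hh); rewrite EFinM; apply: lee_wpmul2l; first by rewrite lee_fin ltW.
    rewrite -hq; apply: (diam_ball_ge hd _ _ _ si0); rewrite hq; lra.
-
  move=> i; case: (hfacts i) => si0 _ _ _ _.
  apply: (le_trans (dist_ball_le hd x (c i) (s i) si0)); rewrite lee_fin.
  have hpb := powR_bound (R := R) N i N0.
  case/andP: (hD i) => _ h2.
  set k := (i %/ N)%N in h2 hpb.
  have e : 2 * a i * L ^+ 2 = (8 * L * r) * (2 ^+ k.+1)^-1.
    rewrite /a /rho -/k [2 ^+ k.+1]exprS; field; rewrite expf_neq0 //=; lra.
  rewrite e in h2; apply: (le_trans h2).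
  rewrite -mulrA -[X in _ <= X]mulrA; apply: ler_pM.
  + lra.
  + by rewrite mulr_ge0 ?invr_ge0 ?exprn_ge0 //; lra.
  + exact: M2.
  + by apply: ler_wpM2l => //; lra.
-
  move=> i; case: (hfacts i) => si0 _ _ _ _.
  apply: (ball_step hd (c i) (c i.+1) (s i) (s i.+1) M M3 si0).
  + have := divmod_succ N i N0; case: ifP => hi [e1 e2].
    * have hs : s i.+1 = s i by rewrite /s /a e1.
      rewrite hs /c e1 e2.
      case: (hP (i %/ N)%N) => _ _ hst _; have := hst (i %% N)%N.
      have -> : rho (i %/ N)%N / (32 * lam * L) = s i / 2 by rewrite /s /a; field; lra.
      lra.
    * have hs : s i.+1 = s i / 2 by rewrite /s /a e1 rhoS; field; lra.
      have ec : c i.+1 = c i.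
        rewrite /c e1 e2; case: (hP (i %/ N)%N.+1) => -> _ _ _.
        case: (hP (i %/ N)%N) => _ hz _ _; rewrite hz //.
        by move: hi; rewrite ltnNge => /negbFE.
      rewrite hs ec (m_xx hd); lra.
  + have := divmod_succ N i N0; case: ifP => hi [e1 e2].
    * by rewrite /s /a e1.
    * have hs : s i.+1 = s i / 2 by rewrite /s /a e1 rhoS; field; lra.
      rewrite hs; lra.
-
  move=> y S uS hS.
  have hA : forall i, a i * 2 ^+ (i %/ N)%N = 2 * r / L.
    by move=> i; rewrite /a /rho; field; rewrite expf_neq0 //=; lra.
  have hl : forall i, lam * s i = a i / 16 by move=> i; case: (hfacts i).
  have := overlap hd x y c a s lam L (2 * r / L) N J0 N0 L1 hJ0 a0 hD hl hA S uS hS.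
  rewrite -(ler_nat R) => h; exact: le_trans h M4.
Qed.
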